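(* Let $\mu_1,\mu_2\in(0,1)$ with $\mu_1>\mu_2$, and let $\mathcal{H}_\mu(\rho)=H_0\rho H_0^\dagger+H_1\rho H_1^\dagger$ with $H_0=|0\rangle\langle0|+\sqrt{\mu}\,|1\rangle\langle1|$ and $H_1=\sqrt{1-\mu}\,|0\rangle\langle1|$ be the qubit amplitude damping channel. Then all maximally entangled states of $\mathbb{C}^2\otimes\mathbb{C}^2$ are equivalent probes for distinguishing $\mathcal{H}_{\mu_1}$ and $\mathcal{H}_{\mu_2}$: the quantity $\|(\mathcal{H}_{\mu_1}\otimes\mathrm{id})(\rho_{AB})-(\mathcal{H}_{\mu_2}\otimes\mathrm{id})(\rho_{AB})\|_1$ (hence the success probability) takes the same value for every maximally entangled pure state $\rho_{AB}$.
   Context: For two channels chosen with equal priors $1/2$ and a bipartite probe $\rho_{AB}$ (channel acting on subsystem $A$), the single-shot success probability is $\frac12+\frac14\|(\mathcal{N}_1\otimes\mathrm{id})(\rho_{AB})-(\mathcal{N}_2\otimes\mathrm{id})(\rho_{AB})\|_1$, where $\|\cdot\|_1$ is the trace norm. A two-qubit pure state is maximally entangled if its reduced states are $\mathbb{I}_2/2$. Probes are equivalent if they give the same success probability. *)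

(* Defs.v *)
(* matrices over the complex numbers R[i] of a real closed field R
   (mathcomp-real-closed); R = the real numbers is the intended instance. *)
From HB Require Import structures.
From mathcomp Require Import all_boot all_order all_algebra.
From mathcomp Require Import complex mxtens.
From Stdlib Require Import ClassicalEpsilon.
Set Implicit Arguments. Unset Strict Implicit. Unset Printing Implicit Defensive.
Import Order.TTheory GRing.Theory Num.Theory.
Local Open Scope ring_scope.

Definition adj {C : numClosedFieldType} {m n : nat} (A : 'M[C]_(m, n)) : 'M[C]_(n, m) :=
  (map_mx Num.conj A)^T.

Definition psd {C : numClosedFieldType} {n : nat} (B : 'M[C]_n) : Prop :=
  adj B = B /\ forall x : 'cV[C]_n, 0 <= (adj x *m B *m x) 0 0.

Definition tracenorm {C : numClosedFieldType} {n : nat} (A : 'M[C]_n) : C :=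
  \tr (epsilon (inhabits (0 : 'M[C]_n))
         (fun B : 'M[C]_n => psd B /\ B *m B = adj A *m A)).

(* partial traces on 'M_(m * n) = operators on C^m (x) C^n (index (i,j) ~ mxtens_index) *)
Definition ptraceB {C : numClosedFieldType} {m n : nat} (X : 'M[C]_(m * n)) : 'M[C]_m :=
  \matrix_(i, i') \sum_(j < n) X (mxtens_index (i, j)) (mxtens_index (i', j)).
Definition ptraceA {C : numClosedFieldType} {m n : nat} (X : 'M[C]_(m * n)) : 'M[C]_n :=
  \matrix_(j, j') \sum_(i < m) X (mxtens_index (i, j)) (mxtens_index (i, j')).

Definition max_entangled {C : numClosedFieldType} (rho : 'M[C]_(2 * 2)) : Prop :=
  (exists psi : 'cV[C]_(2 * 2), rho = psi *m adj psi) /\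
  ptraceB rho = 2^-1%:M /\ ptraceA rho = 2^-1%:M.

Definition H0 (R : rcfType) (mu : R) : 'M[R[i]]_2 :=
  \matrix_(i, j) (if (i == 0) && (j == 0) then 1
                  else if (i == 1) && (j == 1) then (Num.sqrt mu)%:C%C else 0).
Definition H1 (R : rcfType) (mu : R) : 'M[R[i]]_2 :=
  \matrix_(i, j) (if (i == 0) && (j == 1) then (Num.sqrt (1 - mu))%:C%C else 0).

Definition ampdamp (R : rcfType) (mu : R) (rho : 'M[R[i]]_2) : 'M[R[i]]_2 :=
  H0 mu *m rho *m adj (H0 mu) + H1 mu *m rho *m adj (H1 mu).

Definition ampdamp_id (R : rcfType) (mu : R) (rho : 'M[R[i]]_(2 * 2)) : 'M[R[i]]_(2 * 2) :=
  (H0 mu *t 1%:M) *m rho *m adj (H0 mu *t (1%:M : 'M[R[i]]_2))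
  + (H1 mu *t 1%:M) *m rho *m adj (H1 mu *t (1%:M : 'M[R[i]]_2)).

(* Main.v *)
Require Import Defs.
From HB Require Import structures.
From mathcomp Require Import all_boot all_order all_algebra.
From mathcomp Require Import complex mxtens.
From mathcomp Require Import ring.
From Stdlib Require Import ClassicalEpsilon FunctionalExtensionality PropExtensionality.
Import Order.TTheory GRing.Theory Num.Theory.
Local Open Scope ring_scope.
Import Defs.

Section Gen.
Variable C : numClosedFieldType.

Lemma adgE m n (A : 'M[C]_(m,n)) i j : adj A i j = (A j i)^*.
Proof. by rewrite !mxE. Qed.

Lemma adgK m n (A : 'M[C]_(m,n)) : adj (adj A) = A.
Proof. by apply/matrixP=> i j; rewrite !adgE conjCK. Qed.

Lemma adg_mul m n p (A : 'M[C]_(m,n)) (B : 'M[C]_(n,p)) :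
  adj (A *m B) = adj B *m adj A.
Proof. by rewrite /adj map_mxM trmx_mul. Qed.

Lemma adgD m n (A B : 'M[C]_(m,n)) : adj (A + B) = adj A + adj B.
Proof. by apply/matrixP=> i j; rewrite !mxE rmorphD. Qed.

Lemma adgN m n (A : 'M[C]_(m,n)) : adj (- A) = - adj A.
Proof. by apply/matrixP=> i j; rewrite !mxE rmorphN. Qed.

Lemma adgB m n (A B : 'M[C]_(m,n)) : adj (A - B) = adj A - adj B.
Proof. by rewrite adgD adgN. Qed.

Lemma adgZ m n a (A : 'M[C]_(m,n)) : adj (a *: A) = a^* *: adj A.
Proof. by apply/matrixP=> i j; rewrite !mxE rmorphM. Qed.

Lemma adg1 n : adj (1%:M : 'M[C]_n) = 1%:M.
Proof. by apply/matrixP=> i j; rewrite !mxE eq_sym rmorphMn rmorph1. Qed.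

Lemma adg_tens m n p q (A : 'M[C]_(m,n)) (B : 'M[C]_(p,q)) :
  adj (A *t B) = adj A *t adj B.
Proof. by rewrite /adj map_mxT trmx_tens. Qed.

Lemma tens11 m n : (1%:M : 'M[C]_m) *t (1%:M : 'M[C]_n) = 1%:M.
Proof.
apply/matrixP=> i j.
case: (mxtens_indexP i)=> i0 i1; case: (mxtens_indexP j)=> j0 j1.
rewrite tensmxE !mxE (can_eq (@mxtens_indexK _ _)) xpair_eqE.
by case: (i0 == j0); case: (i1 == j1); rewrite ?mulr1 ?mulr0.
Qed.

Lemma normsq_ge0 n (y : 'cV[C]_n) : 0 <= (adj y *m y) 0 0.
Proof.
rewrite mxE; apply: sumr_ge0 => i _; rewrite adgE mulrC -normCK.
exact: exprn_ge0.
Qed.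

Lemma normsq_eq0 n (y : 'cV[C]_n) : (adj y *m y) 0 0 = 0 -> y = 0.
Proof.
rewrite mxE => H; apply/matrixP=> i j; rewrite [j]ord1 mxE.
have hp : forall k : 'I_n, true -> 0 <= adj y 0 k * y k 0.
  by move=> k _; rewrite adgE mulrC -normCK exprn_ge0.
have := psumr_eq0P hp H (i:=i) isT.
rewrite adgE mulrC -normCK => /eqP; rewrite expf_eq0 /= normr_eq0 => /eqP.
by [].
Qed.

End Gen.

Section Gen2.
Variable C : numClosedFieldType.

Lemma sesq_split n (B : 'M[C]_n) (u w : 'cV[C]_n) a b :
  adj (a *: u - b *: w) *m B *m (a *: u - b *: w) =
  (a^* * a) *: (adj u *m B *m u) - (a^* * b) *: (adj u *m B *m w)
  - (b^* * a) *: (adj w *m B *m u) + (b^* * b) *: (adj w *m B *m w).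
Proof.
rewrite adgB !adgZ !mulmxBl !mulmxBr -!scalemxAl -!scalemxAr !scalerA.
by rewrite opprB addrA addrAC.
Qed.

Lemma psd_kernel n (B : 'M[C]_n) (x : 'cV[C]_n) : psd B -> (adj x *m B *m x) 0 0 = 0 -> B *m x = 0.
Proof.
case=> hB hpos h0.
set y := B *m x.
have hxy : adj x *m B *m y = adj y *m y by rewrite /y adg_mul hB.
have hyx : adj y *m B *m x = adj y *m y by rewrite -mulmxA.
set nn := (adj y *m y) 0 0.
set c := (adj y *m B *m y) 0 0.
have nn0 : 0 <= nn by apply: normsq_ge0.
have c0 : 0 <= c by apply: hpos.
have := hpos ((c+1) *: x - nn *: y).
rewrite sesq_split hxy hyx.
set p := adj x *m B *m x.
set q := adj y *m y.
set r := adj y *m B *m y.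
have h0' : p 0 0 = 0 by exact: h0.
have hnn : q 0 0 = nn by [].
have hc : r 0 0 = c by [].
clearbody p q r.
have r1 : (c + 1)^* = c + 1 by rewrite conj_Creal // ger0_real // addr_ge0.
have r2 : nn^* = nn by rewrite conj_Creal // ger0_real.
rewrite !mxE h0' hnn hc r1 r2.
have -> : (c + 1) * (c + 1) * 0 - (c + 1) * nn * nn - nn * (c + 1) * nn + nn * nn * c
   = - (nn * nn * (c + 2)) by ring.
rewrite oppr_ge0 => hle.
have : nn * nn * (c + 2) = 0.
  by apply/eqP; rewrite eq_le hle !mulr_ge0 // addr_ge0.
move/eqP; rewrite !mulf_eq0 orbb => /orP [/eqP hn|].
  by apply: normsq_eq0.
by rewrite gt_eqF // ltr_wpDl.
Qed.


Lemma diag_form n (X B : 'M[C]_n) k :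
  (adj X *m B *m X) k k = (adj (col k X) *m B *m col k X) 0 0.
Proof.
rewrite !mxE; apply: eq_bigr => j _; rewrite !mxE; congr (_ * _).
by apply: eq_bigr => l _; rewrite !adgE !mxE.
Qed.

Lemma diag_form2 n (X : 'M[C]_n) k :
  (adj X *m X) k k = (adj (col k X) *m col k X) 0 0.
Proof. by rewrite !mxE; apply: eq_bigr => j _; rewrite !adgE !mxE. Qed.

Lemma tr_form_ge0 n (X B : 'M[C]_n) : psd B -> 0 <= \tr (adj X *m B *m X).
Proof.
case=> _ hp; rewrite /mxtrace; apply: sumr_ge0 => k _.
by rewrite diag_form; apply: hp.
Qed.

Lemma col_zero n (X : 'M[C]_n) : (forall k, col k X = 0) -> X = 0.
Proof.
move=> h; apply/matrixP => i k.
by have := congr1 (fun M : 'cV_n => M i 0) (h k); rewrite !mxE.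
Qed.

Lemma psd_sqrt_unique n (B D : 'M[C]_n) :
  psd B -> psd D -> B *m B = D *m D -> B = D.
Proof.
move=> pB pD hBD.
have [hB _] := pB; have [hD _] := pD.
set X := B - D.
have hX : adj X = X by rewrite /X adgB hB hD.
have htr : \tr (adj X *m B *m X) + \tr (adj X *m D *m X) = 0.
  rewrite hX -mxtraceD -mulmxDl -mulmxDr.
  have hmid : (B + D) *m X = D *m B - B *m D.
    rewrite /X mulmxBr !mulmxDl hBD.
    by rewrite [D *m D + _]addrC opprD addrA addrAC addrK.
  rewrite -mulmxA hmid /X mulmxBl !mulmxBr !raddfB /=.
  have f1 : \tr (B *m (D *m B)) = \tr (D *m (D *m D))
    by rewrite mxtrace_mulC -mulmxA hBD.
  have f2 : \tr (B *m (B *m D)) = \tr (D *m (D *m D))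
    by rewrite mulmxA hBD -mulmxA.
  have f3 : \tr (D *m (D *m B)) = \tr (B *m (B *m B))
    by rewrite mulmxA -hBD -mulmxA.
  have f4 : \tr (D *m (B *m D)) = \tr (B *m (B *m B))
    by rewrite mxtrace_mulC -mulmxA -hBD.
  by rewrite f1 f2 f3 f4 opprK addNr !subrr addr0.
have /eqP := htr; rewrite paddr_eq0 ?tr_form_ge0 // => /andP [/eqP t1 /eqP t2].
have kill : forall E : 'M[C]_n, psd E -> \tr (adj X *m E *m X) = 0 -> E *m X = 0.
  move=> E pE hE.
  have hp : forall k : 'I_n, true -> 0 <= (adj X *m E *m X) k k.
    by move=> k _; rewrite diag_form; case: pE => _; apply.
  apply/matrixP => i k.
  have := psumr_eq0P hp hE (i:=k) isT.
  rewrite diag_form => /(@psd_kernel n E _ pE) /(congr1 (fun M : 'cV_n => M i 0)).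
  by rewrite !mxE => H; apply: etrans H; apply: eq_bigr => j _; rewrite !mxE.
have hXX : adj X *m X = 0.
  by rewrite hX {1}/X mulmxBl (kill B pB t1) (kill D pD t2) subrr.
have : X = 0.
  apply: col_zero => k; apply: normsq_eq0.
  by rewrite -diag_form2 hXX mxE.
by move/eqP; rewrite subr_eq0 => /eqP.
Qed.
End Gen2.

Section Gen3.
Variable C : numClosedFieldType.

Lemma psd_conj n (B W : 'M[C]_n) : psd B -> psd (adj W *m B *m W).
Proof.
case=> hB hp; split; first by rewrite !adg_mul adgK hB mulmxA.
move=> x.
have -> : adj x *m (adj W *m B *m W) *m x = adj (W *m x) *m B *m (W *m x).
  by rewrite adg_mul !mulmxA.
exact: hp.
Qed.

Lemma tracenorm_conj n (W A : 'M[C]_n) :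
  adj W *m W = 1%:M -> W *m adj W = 1%:M ->
  tracenorm (W *m A *m adj W) = tracenorm A.
Proof.
move=> hWW hWW'; rewrite /tracenorm.
set M := adj A *m A.
have hM : adj (W *m A *m adj W) *m (W *m A *m adj W) = W *m M *m adj W.
  rewrite !adg_mul adgK !mulmxA -(mulmxA (W *m adj A) (adj W) W) hWW mulmx1.
  by rewrite /M.
rewrite hM.
set P := fun B => psd B /\ B *m B = W *m M *m adj W.
set Q := fun B => psd B /\ B *m B = M.
have PQ : forall B, P B -> Q (adj W *m B *m W).
  move=> B [pB hB]; split; first exact: psd_conj.
  rewrite !mulmxA -(mulmxA (adj W *m B) W (adj W)) hWW' mulmx1.
  rewrite -(mulmxA (adj W) B B) hB !mulmxA hWW mul1mx.
  by rewrite -mulmxA hWW mulmx1.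
have QP : forall B, Q B -> P (W *m B *m adj W).
  move=> B [pB hB]; split.
    by have := @psd_conj n B (adj W) pB; rewrite adgK.
  rewrite !mulmxA -(mulmxA (W *m B) (adj W) W) hWW mulmx1.
  by rewrite -(mulmxA W B B) hB /M mulmxA.
case: (classic (exists B, Q B)) => [[B0 hB0]|nQ].
  have sQ := epsilon_spec (inhabits (0 : 'M[C]_n)) Q (ex_intro _ B0 hB0).
  have sP := epsilon_spec (inhabits (0 : 'M[C]_n)) P (ex_intro _ _ (QP _ hB0)).
  move: sQ sP.
  set b1 := epsilon _ Q; set b2 := epsilon _ P => sQ sP.
  have e := @psd_sqrt_unique C n _ _ (PQ b2 sP).1 sQ.1 (etrans (PQ b2 sP).2 (esym sQ.2)).
  by rewrite -e mxtrace_mulC mulmxA hWW' mul1mx.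
have -> : P = Q.
  apply: functional_extensionality => B; apply: propositional_extensionality.
  split=> h; exfalso; apply: nQ.
    by exists (adj W *m B *m W); apply: PQ.
  by exists B.
by [].
Qed.
End Gen3.

Section Gen4.
Variable C : numClosedFieldType.

Lemma adg_tr m n (A : 'M[C]_(m,n)) : adj (A^T) = (adj A)^T.
Proof. by apply/matrixP => i j; rewrite !mxE. Qed.

Lemma tens_comm m n (K : 'M[C]_m) (V : 'M[C]_n) :
  (K *t 1%:M) *m (1%:M *t V) = (1%:M *t V) *m (K *t 1%:M).
Proof. by rewrite !tensmx_mul !mul1mx !mulmx1. Qed.

Lemma conj_sandwich m n (K : 'M[C]_m) (V : 'M[C]_n) (X : 'M[C]_(m * n)) :
  let W := (1%:M *t V) in
  (K *t 1%:M) *m (W *m X *m adj W) *m adj (K *t 1%:M)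
  = W *m ((K *t 1%:M) *m X *m adj (K *t 1%:M)) *m adj W.
Proof.
move=> W.
have h : adj W *m adj (K *t 1%:M) = adj (K *t 1%:M) *m adj W.
  by rewrite -!adg_mul /W tens_comm.
rewrite !mulmxA /W tens_comm -/W -!mulmxA; congr (_ *m (_ *m (_ *m _))).
by rewrite h.
Qed.

Lemma sum_tens m n (F : 'I_(m * n) -> C) :
  \sum_k F k = \sum_(a < m) \sum_(b < n) F (mxtens_index (a, b)).
Proof.
rewrite (reindex (@mxtens_index m n)) /=; last first.
  by exists (@mxtens_unindex m n) => x _; [apply: mxtens_indexK | apply: mxtens_unindexK].
by rewrite pair_big /=; apply: eq_bigr => -[a b] _.
Qed.

Definition Mof m n (psi : 'cV[C]_(m * n)) : 'M[C]_(m, n) :=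
  \matrix_(i, j) psi (mxtens_index (i, j)) 0.
Arguments Mof {m n}.

Lemma Mof_inj m n (psi phi : 'cV[C]_(m * n)) : Mof psi = Mof phi -> psi = phi.
Proof.
move=> h; apply/matrixP => k z; rewrite [z]ord1.
case: (mxtens_indexP k) => i j.
by have := congr1 (fun M : 'M_(m, n) => M i j) h; rewrite !mxE.
Qed.

Lemma Mof_mul m n (V : 'M[C]_n) (phi : 'cV[C]_(m * n)) :
  Mof ((1%:M *t V) *m phi) = Mof phi *m V^T.
Proof.
apply/matrixP => i j; rewrite !mxE sum_tens (bigD1 i) //= [X in _ + X = _]big1 ?addr0.
  by apply: eq_bigr => b _; rewrite tensmxE !mxE eqxx mul1r mulrC.
move=> a /negbTE hai; apply: big1 => b _.
by rewrite tensmxE !mxE eq_sym hai mul0r mul0r.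
Qed.

Lemma ptraceB_M m n (psi : 'cV[C]_(m * n)) :
  ptraceB (psi *m adj psi) = Mof psi *m adj (Mof psi).
Proof.
apply/matrixP => i i'; rewrite !mxE; apply: eq_bigr => j _.
by rewrite [LHS]mxE big_ord1 !adgE /Mof !mxE.
Qed.

Lemma ptraceA_M m n (psi : 'cV[C]_(m * n)) :
  adj (Mof psi) *m Mof psi = map_mx Num.conj (ptraceA (psi *m adj psi)).
Proof.
apply/matrixP => j j'; rewrite !mxE rmorph_sum; apply: eq_bigr => i _.
by rewrite adgE /Mof !mxE big_ord1 adgE rmorphM /= conjCK.
Qed.

End Gen4.
Arguments Mof {C m n}.

Lemma conj_sandwich' (C : numClosedFieldType) N (K W X : 'M[C]_N) :
  K *m W = W *m K ->
  K *m (W *m X *m adj W) *m adj K = W *m (K *m X *m adj K) *m adj W.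
Proof.
move=> h.
have h' : adj W *m adj K = adj K *m adj W by rewrite -!adg_mul h.
by rewrite !mulmxA h -!mulmxA h'.
Qed.

Lemma ampd_conj (R : rcfType) (mu : R) (V : 'M[R[i]]_2) (X : 'M[R[i]]_(2 * 2)) :
  ampdamp_id mu ((1%:M *t V) *m X *m adj (1%:M *t V))
  = (1%:M *t V) *m ampdamp_id mu X *m adj (1%:M *t V).
Proof.
rewrite /ampdamp_id; move: (H0 mu) (H1 mu) => A B.
rewrite (@conj_sandwich' _ _ (A *t 1%:M) (1%:M *t V) X (@tens_comm _ _ _ A V)).
rewrite (@conj_sandwich' _ _ (B *t 1%:M) (1%:M *t V) X (@tens_comm _ _ _ B V)).
by rewrite -mulmxDl -mulmxDr.
Qed.

Section Gen5.
Variable C : numClosedFieldType.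

Lemma conj2 : (2 : C)^* = 2.
Proof. exact: conjC_nat. Qed.

Lemma conjhalf : (2^-1 : C)^* = 2^-1.
Proof. by rewrite fmorphV /= conj2. Qed.

Lemma map_conj_scalar n (a : C) : map_mx Num.conj (a%:M : 'M_n) = (a^*)%:M.
Proof. by apply/matrixP => i j; rewrite !mxE rmorphMn. Qed.

Lemma two_neq0 : (2 : C) != 0.
Proof. by rewrite pnatr_eq0. Qed.

Lemma half_unit n (X Y : 'M[C]_n) :
  X *m adj X = 2^-1%:M -> adj Y *m Y = 2^-1%:M ->
  (2 *: (adj Y *m X)) *m adj (2 *: (adj Y *m X)) = 1%:M.
Proof.
move=> hX hY.
rewrite adgZ adg_mul adgK conj2 -scalemxAl -scalemxAr scalerA.
rewrite mulmxA -(mulmxA (adj Y) X (adj X)) hX mul_mx_scalar -scalemxAl hY.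
rewrite !scale_scalar_mx; congr (_%:M).
by field.
Qed.
End Gen5.

Theorem lemma3 (R : rcfType) (mu1 mu2 : R)
  (h1 : 0 < mu1 < 1) (h2 : 0 < mu2 < 1) (h12 : mu2 < mu1)
  (rho sigma : 'M[R[i]]_(2 * 2)) :
  max_entangled rho -> max_entangled sigma ->
  tracenorm (ampdamp_id mu1 rho - ampdamp_id mu2 rho) =
  tracenorm (ampdamp_id mu1 sigma - ampdamp_id mu2 sigma).
Proof.
move=> [[psi ->] [hBr hAr]] [[phi ->] [hBs hAs]].
rewrite ptraceB_M in hBr; rewrite ptraceB_M in hBs.
have hAr' : adj (Mof psi) *m Mof psi = 2^-1%:M.
  by rewrite ptraceA_M hAr map_conj_scalar conjhalf.
have hAs' : adj (Mof phi) *m Mof phi = 2^-1%:M.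
  by rewrite ptraceA_M hAs map_conj_scalar conjhalf.
set Mp := Mof psi in hBr hAr'.
set Mf := Mof phi in hBs hAs'.
set U := 2 *: (adj Mf *m Mp).
set U' := 2 *: (adj Mp *m Mf).
have eU : adj U = U' by rewrite /U adgZ adg_mul adgK conj2.
have hUU : U *m adj U = 1%:M by apply: half_unit.
have hUU' : adj U *m U = 1%:M.
  by rewrite -[X in _ *m X](@adgK _ _ _ U) eU /U'; apply: half_unit.
set V := U^T.
set W := (1%:M : 'M[R[i]]_2) *t V.
have hWW : adj W *m W = 1%:M.
  rewrite adg_tens adg1 tensmx_mul mul1mx /V adg_tr -trmx_mul hUU trmx1; exact: tens11.
have hWW' : W *m adj W = 1%:M.
  rewrite adg_tens adg1 tensmx_mul mul1mx /V adg_tr -trmx_mul hUU' trmx1; exact: tens11.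
have hpsi : psi = W *m phi.
  apply: Mof_inj; rewrite Mof_mul /V trmxK -/Mp -/Mf /U -scalemxAr mulmxA hBs.
  by rewrite mul_scalar_mx scalerA mulfV ?two_neq0 // scale1r.
rewrite hpsi adg_mul mulmxA -(mulmxA W phi).
rewrite (@ampd_conj R mu1 V (phi *m adj phi)) (@ampd_conj R mu2 V (phi *m adj phi)).
rewrite -mulmxBl -mulmxBr.
by rewrite tracenorm_conj.
Qed.
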